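(* Consider the adaptive sieving procedure described in the context. For each $i\in\{1,\dots,N\}$, the inner loop for $C_i$ terminates after finitely many iterations: there exists an integer $\bar{k}$ with $0\le\bar{k}\le n$ such that $\mathcal{J}^{\bar{k}}(C_i)=\emptyset$. Moreover, the output tuple $(\overline{W}(C_i),\overline{b}(C_i),\overline{v}(C_i),\overline{U}(C_i),\overline{\lambda}(C_i),\overline{\Lambda}(C_i))$ is a KKT tuple of the perturbed full problem $$\min_{W,b,v,U}\ \tfrac12\|W\|_F^2+\tau\|U\|_*+\delta^*_{S^i}(v)-\langle\delta_W,W\rangle-b\delta_b-\langle\delta_v,v\rangle-\langle\delta_U,U\rangle\quad\text{s.t.}\quad \mathcal{A}W+by+v-e_n=\delta_\lambda,\ W-U=\delta_\Lambda$$ for some error $(\delta_W,\delta_b,\delta_v,\delta_U,\delta_\lambda,\delta_\Lambda)$ with $\max(\|\delta_W\|,|\delta_b|,\|\delta_v\|,\|\delta_U\|,\|\delta_\lambda\|,\|\delta_\Lambda\|)\le\varepsilon$; that is, $\delta_W=\overline{W}+\mathcal{A}^*\overline{\lambda}+\overline{\Lambda}$, $\delta_b=y^\top\overline{\lambda}$, $\delta_v-\overline{\lambda}\in\partial\delta^*_{S^i}(\overline{v})$, $\delta_U+\overline{\Lambda}\in\partial(\tau\|\cdot\|_* )(\overline{U})$, $\delta_\lambda=\mathcal{A}\overline{W}+\overline{b}y+\overline{v}-e_n$, $\delta_\Lambda=\overline{W}-\overline{U}$ (all barred quantities evaluated at $C_i$).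
   Context: Data: $X_1,\dots,X_n\in\mathbb{R}^{p\times q}$, $y=(y_1,\dots,y_n)^\top\in\{-1,+1\}^n$, $\tau>0$, $e_n$ the all-ones vector, $\|\cdot\|_*$ the nuclear norm, $\langle X,Y\rangle=\operatorname{tr}(X^\top Y)$. $\mathcal{A}W=(\langle y_1X_1,W\rangle,\dots,\langle y_nX_n,W\rangle)^\top$, $\mathcal{A}^*z=\sum_j z_jy_jX_j$; for $\mathcal{I}\subseteq[n]:=\{1,\dots,n\}$, $\mathcal{A}_{\mathcal{I}}W:=(\mathcal{A}W)_{\mathcal{I}}$, $\mathcal{A}^*_{\mathcal{I}}z:=\sum_{j\in\mathcal{I}}z_jy_jX_j$, and $y_{\mathcal{I}},(e_n)_{\mathcal{I}}$ are subvectors. For grid values $0<C_0<C_1<\dots<C_N$, let $S^i=[0,C_i]^n$, $S^i_{\mathcal{I}}=[0,C_i]^{|\mathcal{I}|}$, and $\delta^*_K$ the support function of $K$. Reduced perturbed problem for $\mathcal{I}$ and $C_i$: minimize $\frac12\|W\|_F^2+\tau\|U\|_*+\delta^*_{S^i_{\mathcal{I}}}(v_{\mathcal{I}})-\langle\delta_W,W\rangle-b\delta_b-\langle\delta_{v_\mathcal{I}},v_{\mathcal{I}}\rangle-\langle\delta_U,U\rangle$ subject to $\mathcal{A}_{\mathcal{I}}W+by_{\mathcal{I}}+v_{\mathcal{I}}-(e_n)_{\mathcal{I}}=\delta_{\lambda_\mathcal{I}}$, $W-U=\delta_\Lambda$. A tuple $(W,b,v_{\mathcal{I}},U,\lambda_{\mathcal{I}},\Lambda)$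 is a KKT tuple of it if $\delta_W=W+\mathcal{A}^*_{\mathcal{I}}\lambda_{\mathcal{I}}+\Lambda$, $\delta_b=y_{\mathcal{I}}^\top\lambda_{\mathcal{I}}$, $\delta_{v_\mathcal{I}}-\lambda_{\mathcal{I}}\in\partial\delta^*_{S^i_{\mathcal{I}}}(v_{\mathcal{I}})$, $\delta_U+\Lambda\in\partial(\tau\|\cdot\|_* )(U)$, $\delta_{\lambda_\mathcal{I}}=\mathcal{A}_{\mathcal{I}}W+by_{\mathcal{I}}+v_{\mathcal{I}}-(e_n)_{\mathcal{I}}$, $\delta_\Lambda=W-U$. Procedure (AS strategy): given an initial $(\overline{W}(C_0),\overline{b}(C_0))$, a tolerance $\varepsilon\ge0$, a scalar $\widehat{\varepsilon}\ge0$ and a positive integer $d_{\max}$, set $\mathcal{I}^*(C_0)=\{j: y_j(\langle\overline{W}(C_0),X_j\rangle+\overline{b}(C_0))\le1+\widehat{\varepsilon}\}$. For $i=1,\dots,N$, set $\mathcal{I}^0(C_i)=\mathcal{I}^*(C_{i-1})$, $k=0$, and repeat: Step 1: find a KKT tuple $(W^k,b^k,v^k_{\mathcal{I}},U^k,\lambda^k_{\mathcal{I}},\Lambda^k)$ of the reduced perturbed problem with $\mathcal{I}=\mathcal{I}^k(C_i)$ for some errors all of norm at most $\varepsilon$. Step 2: with $\overline{\mathcal{I}}^k=[n]\setminus\mathcal{I}^k(C_i)$, set $v^k_j=1-y_j(\langle W^k,X_j\rangle+b^k)$ for $j\in\overline{\mathcal{I}}^k$ and $\mathcal{J}^k(C_i)=\{j\in\overline{\mathcal{I}}^k: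 v^k_j\ge0\}$; extend $v^k_{\mathcal{I}}$ to $v^k\in\mathbb{R}^n$ by these values, and $\lambda^k_{\mathcal{I}}$ to $\lambda^k\in\mathbb{R}^n$ by $\lambda^k_j=-C_i$ for $j\in\mathcal{J}^k(C_i)$ and $\lambda^k_j=0$ for other $j\in\overline{\mathcal{I}}^k$. Step 3: if $\mathcal{J}^k(C_i)=\emptyset$, output $(\overline{W}(C_i),\overline{b}(C_i),\overline{v}(C_i),\overline{U}(C_i),\overline{\lambda}(C_i),\overline{\Lambda}(C_i))=(W^k,b^k,v^k,U^k,\lambda^k,\Lambda^k)$, set $\mathcal{I}^*(C_i)=\{j: y_j(\langle\overline{W}(C_i),X_j\rangle+\overline{b}(C_i))\le1+\widehat{\varepsilon}\}$ and move to $i+1$; otherwise choose a positive integer $d\le\min\{|\mathcal{J}^k(C_i)|,d_{\max}\}$, let $\widehat{\mathcal{J}}^{k+1}(C_i)$ be the indices $j\in\mathcal{J}^k(C_i)$ of the $d$ largest values among $\{v^k_t\}_{t\in\mathcal{J}^k(C_i)}$, set $\mathcal{I}^{k+1}(C_i)=\mathcal{I}^k(C_i)\cup\widehat{\mathcal{J}}^{k+1}(C_i)$, $k\leftarrow k+1$, and return to Step 1. *)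

(* Defs.v *)
From HB Require Import structures.
From mathcomp Require Import all_boot all_order all_algebra.
From mathcomp Require Import classical_sets reals.
Set Implicit Arguments.
Unset Strict Implicit.
Unset Printing Implicit Defensive.
Import Order.TTheory GRing.Theory Num.Theory.
Local Open Scope ring_scope.
Local Open Scope classical_set_scope.

Section ASDefs.
Variable R : realType.

Definition minner (p q : nat) (A B : 'M[R]_(p, q)) : R := \tr (A^T *m B).

Definition frob (p q : nat) (A : 'M[R]_(p, q)) : R := Num.sqrt (minner A A).

Definition cvnorm (m : nat) (u : 'cV[R]_m) : R := Num.sqrt (\sum_(i < m) u i 0 ^+ 2).

(* vectors of R^n are functions 'I_n -> R; a sub-vector x_I (I a subset of
   [n]) is represented by the full vector x, of which only the coordinates
   in I are ever used. *)
Definition dotI (n : nat) (I : {set 'I_n}) (u v : 'I_n -> R) : R :=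
  \sum_(j in I) u j * v j.

Definition vnormI (n : nat) (I : {set 'I_n}) (u : 'I_n -> R) : R :=
  Num.sqrt (\sum_(j in I) u j ^+ 2).

Definition boxI (n : nat) (I : {set 'I_n}) (C : R) : set ('I_n -> R) :=
  [set s | forall j, j \in I -> 0 <= s j <= C].

Definition suppI (n : nat) (I : {set 'I_n}) (C : R) (v : 'I_n -> R) : R :=
  sup [set dotI I s v | s in boxI I C].

Definition subdiffI (n : nat) (I : {set 'I_n}) (f : ('I_n -> R) -> R)
  (v : 'I_n -> R) : set ('I_n -> R) :=
  [set g | forall z, f v + dotI I g (fun j => z j - v j) <= f z].

Definition specnorm (p q : nat) (X : 'M[R]_(p, q)) : R :=
  sup [set r | exists (u : 'cV[R]_p) (w : 'cV[R]_q),
         [/\ cvnorm u = 1, cvnorm w = 1 & r = `|(u^T *m X *m w) 0 0|] ].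

(* nuclear norm ||U||_* (sum of singular values), as the dual norm of the
   spectral norm: ||U||_* = sup { <X, U> : ||X||_2 <= 1 } *)
Definition nucnorm (p q : nat) (U : 'M[R]_(p, q)) : R :=
  sup [set minner X U | X in [set X | specnorm X <= 1]].

Definition msubdiff (p q : nat) (f : 'M[R]_(p, q) -> R) (U : 'M[R]_(p, q))
  : set 'M[R]_(p, q) :=
  [set G | forall Z, f U + minner G (Z - U) <= f Z].

Record ktuple (n p q : nat) := mkTuple {
  tW : 'M[R]_(p, q);
  tb : R;
  tv : 'I_n -> R;
  tU : 'M[R]_(p, q);
  tlam : 'I_n -> R;
  tLam : 'M[R]_(p, q) }.

Section Problem.
Variables (n p q : nat) (X : 'I_n -> 'M[R]_(p, q)) (y : 'I_n -> R) (tau : R).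

Definition Aop (W : 'M[R]_(p, q)) (j : 'I_n) : R := minner (y j *: X j) W.

Definition AstarI (I : {set 'I_n}) (z : 'I_n -> R) : 'M[R]_(p, q) :=
  \sum_(j in I) (z j * y j) *: X j.

Definition KKT_red (I : {set 'I_n}) (C : R) (t e : ktuple n p q) : Prop :=
  [/\ tW e = tW t + AstarI I (tlam t) + tLam t,
      tb e = \sum_(j in I) y j * tlam t j,
      subdiffI I (suppI I C) (tv t) (fun j => tv e j - tlam t j),
      msubdiff (fun Z => tau * nucnorm Z) (tU t) (tU e + tLam t)
    & (forall j, j \in I ->
         tlam e j = Aop (tW t) j + tb t * y j + tv t j - 1)
      /\ tLam e = tW t - tU t].

Definition errs_le (I : {set 'I_n}) (eps : R) (e : ktuple n p q) : Prop :=
  [/\ frob (tW e) <= eps, `|tb e| <= eps, vnormI I (tv e) <= eps,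
      frob (tU e) <= eps & vnormI I (tlam e) <= eps /\ frob (tLam e) <= eps].

Definition KKT_full (C : R) (t e : ktuple n p q) : Prop :=
  KKT_red [set: 'I_n] C t e.
Definition errs_full_le (eps : R) (e : ktuple n p q) : Prop :=
  errs_le [set: 'I_n] eps e.

Definition vext (I : {set 'I_n}) (t : ktuple n p q) (j : 'I_n) : R :=
  if j \in I then tv t j else 1 - y j * (minner (tW t) (X j) + tb t).

Definition Jset (I : {set 'I_n}) (t : ktuple n p q) : {set 'I_n} :=
  [set j | (j \notin I) && (0 <= vext I t j)].

Definition lamext (I : {set 'I_n}) (C : R) (t : ktuple n p q) (j : 'I_n) : R :=
  if j \in I then tlam t j else if j \in Jset I t then - C else 0.

Definition extend (I : {set 'I_n}) (C : R) (t : ktuple n p q) : ktuple n p q :=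
  mkTuple (tW t) (tb t) (vext I t) (tU t) (lamext I C t) (tLam t).

Definition top_d (J Jh : {set 'I_n}) (v : 'I_n -> R) (d : nat) : Prop :=
  [/\ Jh \subset J, #|Jh| = d &
      forall j t, j \in Jh -> t \in J :\: Jh -> v t <= v j].

Definition Istar (epshat : R) (W : 'M[R]_(p, q)) (b : R) : {set 'I_n} :=
  [set j | y j * (minner W (X j) + b) <= 1 + epshat].

(* A run of the AS strategy on the grid C_0 < ... < C_N:
   Iseq i k = I^k(C_i), T i k = the KKT tuple of Step 1 (its v and lambda
   components only matter on I^k(C_i)), outW i / outb i = W-bar(C_i),
   b-bar(C_i) (outW 0, outb 0 = the given initial point). *)
Definition AS_run (N : nat) (C : nat -> R) (eps epshat : R) (dmax : nat)
  (W0 : 'M[R]_(p, q)) (b0 : R)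
  (Iseq : nat -> nat -> {set 'I_n}) (T : nat -> nat -> ktuple n p q)
  (outW : nat -> 'M[R]_(p, q)) (outb : nat -> R) : Prop :=
  [/\ outW 0 = W0 /\ outb 0 = b0,
      (forall i, (1 <= i <= N)%N ->
         Iseq i 0%N = Istar epshat (outW i.-1) (outb i.-1)),
      (forall i k, (1 <= i <= N)%N ->
         (forall k', (k' < k)%N -> Jset (Iseq i k') (T i k') != finset.set0) ->
         exists e, errs_le (Iseq i k) eps e /\ KKT_red (Iseq i k) (C i) (T i k) e),
      (forall i k, (1 <= i <= N)%N ->
         (forall k', (k' <= k)%N -> Jset (Iseq i k') (T i k') != finset.set0) ->
         exists (d : nat) (Jh : {set 'I_n}),
           [/\ (0 < d)%N, (d <= minn #|Jset (Iseq i k) (T i k)| dmax)%N,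
               top_d (Jset (Iseq i k) (T i k)) Jh (vext (Iseq i k) (T i k)) d
             & Iseq i k.+1 = Iseq i k :|: Jh])
    &
      (forall i k, (1 <= i <= N)%N ->
         (forall k', (k' < k)%N -> Jset (Iseq i k') (T i k') != finset.set0) ->
         Jset (Iseq i k) (T i k) = finset.set0 ->
         outW i = tW (T i k) /\ outb i = tb (T i k))].

End Problem.
End ASDefs.

(* Main.v *)
Require Import Defs.
From HB Require Import structures.
From mathcomp Require Import all_boot all_order all_algebra.
From mathcomp Require Import boolp classical_sets reals.
From mathcomp Require Import ring lra zify.
Import Order.TTheory GRing.Theory Num.Theory.
Local Open Scope ring_scope.
Local Open Scope classical_set_scope.
Lemma hs (R : realType) n (I : {set 'I_n}) (C : R) v : 0 <= C ->
  has_sup [set dotI I s v | s in boxI I C].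
Proof.
move=> C0; split.
  exists (dotI I (fun=> 0) v); exists (fun=> 0) => //.
  by move=> j _; rewrite lexx C0.
exists (\sum_(j in I) C * `|v j|) => _ [s Hs <-].
rewrite /dotI; apply: ler_sum => j jI.
have /andP[s0 sC] := Hs j jI.
apply: le_trans (ler_norm _) _; rewrite normrM (ger0_norm s0).
by apply: ler_wpM2r.
Qed.

Lemma supp_mono (R : realType) n (I : {set 'I_n}) (C : R) z : 0 <= C ->
  suppI I C z <= suppI [set: 'I_n] C z.
Proof.
move=> C0; apply: ge_sup; first by exists (dotI I (fun=> 0) z); exists (fun=> 0) => // j _; rewrite lexx C0.
move=> _ [s Hs <-].
have HH := sup_upper_bound (hs _ _ [set: 'I_n] C z C0); apply: HH.
exists (fun j => if j \in I then s j else 0).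
  by move=> j _; case: ifP => jI; [exact: Hs|rewrite lexx C0].
rewrite /dotI [RHS]big_mkcond /= [LHS]big_mkcond /=; apply: eq_bigr => j _.
by rewrite inE; case: ifP => // _; rewrite mul0r.
Qed.

Lemma supp_neg (R : realType) n (I : {set 'I_n}) (C : R) v : 0 <= C ->
  (forall j, j \notin I -> v j < 0) ->
  suppI [set: 'I_n] C v <= suppI I C v.
Proof.
move=> C0 Hv; apply: ge_sup; first by exists (dotI [set: 'I_n] (fun=> 0) v); exists (fun=> 0) => // j _; rewrite lexx C0.
move=> _ [s Hs <-].
have HH := sup_upper_bound (hs _ _ I C v C0); apply: le_trans (HH _ _); last first.
  by exists s => // j _; apply: Hs; rewrite finset.in_setT.
rewrite /dotI (bigID (fun j => j \in I)) /= [X in _ <= X](big_setID I) /=.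
apply: lerD.
  rewrite finset.setIid; rewrite le_eqVlt; apply/orP; left; apply/eqP; apply: eq_bigl => j; by rewrite !inE.
rewrite finset.setDv big_set0.
apply: sumr_le0 => j /andP[_ jI].
have /andP[s0 _] := Hs j (finset.in_setT j).
by rewrite mulr_ge0_le0 // ltW // Hv.
Qed.

Lemma suppI_ext (R : realType) n (I : {set 'I_n}) (C : R) u v :
  (forall j, j \in I -> u j = v j) -> suppI I C u = suppI I C v.
Proof.
move=> Huv; rewrite /suppI; congr sup.
rewrite funeqE => r; rewrite propeqE; split=> -[s Hs <-]; exists s => //;
  rewrite /dotI; apply: eq_bigr => j jI; by rewrite Huv.
Qed.

Lemma vnorm_ext (R : realType) n (I : {set 'I_n}) (u : 'I_n -> R) :
  vnormI [set: 'I_n] (fun j => if j \in I then u j else 0) = vnormI I u.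
Proof.
rewrite /vnormI; congr Num.sqrt.
rewrite [RHS]big_mkcond /=; apply: eq_big => [j|j _]; first by rewrite finset.in_setT.
by case: ifP => //; rewrite expr0n.
Qed.

Lemma minnerC (R : realType) p q (A B : 'M[R]_(p, q)) : minner A B = minner B A.
Proof. by rewrite /minner -mxtrace_tr trmx_mul trmxK. Qed.

Lemma minnerZ (R : realType) p q (a : R) (A B : 'M[R]_(p, q)) :
  minner (a *: A) B = a * minner A B.
Proof. by rewrite /minner linearZ /= -scalemxAl mxtraceZ. Qed.

Theorem theorem3 (R : realType) (n p q : nat) (X : 'I_n -> 'M[R]_(p, q))
  (y : 'I_n -> R) (tau : R) (N : nat) (C : nat -> R) (eps epshat : R)
  (dmax : nat) (W0 : 'M[R]_(p, q)) (b0 : R)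
  (Iseq : nat -> nat -> {set 'I_n}) (T : nat -> nat -> ktuple R n p q)
  (outW : nat -> 'M[R]_(p, q)) (outb : nat -> R) :
  (forall j, y j = 1 \/ y j = -1) ->
  0 < tau ->
  0 < C 0%N ->
  (forall i, (i < N)%N -> C i < C i.+1) ->
  0 <= eps -> 0 <= epshat -> (0 < dmax)%N ->
  AS_run X y tau N C eps epshat dmax W0 b0 Iseq T outW outb ->
  forall i, (1 <= i <= N)%N ->
  exists kbar : nat,
    [/\ (kbar <= n)%N,
        (forall k, (k < kbar)%N -> Jset X y (Iseq i k) (T i k) != finset.set0),
        Jset X y (Iseq i kbar) (T i kbar) = finset.set0
      & exists e : ktuple R n p q,
          errs_full_le eps e /\
          KKT_full X y tau (C i) (extend X y (Iseq i kbar) (C i) (T i kbar)) e].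
Proof.
move=> _ _ C0 Cinc _ _ _ [_ _ Hs1 Hs3 _] i Hi.
have Cpos : forall k, (k <= N)%N -> 0 < C k.
  elim=> [//|k IH] Hk; apply: lt_trans (IH (ltnW Hk)) (Cinc k Hk).
have CiP : 0 <= C i by apply/ltW/Cpos; case/andP: Hi.
pose J k := Jset X y (Iseq i k) (T i k).
have Hcard : forall k, (forall k', (k' < k)%N -> J k' != finset.set0) ->
    (k <= #|Iseq i k|)%N.
  elim=> [//|k IH] Hk.
  have Hk' : forall k', (k' <= k)%N -> J k' != finset.set0 by move=> k' ?; apply: Hk.
  have [d [Jh [d0 _ [sub cJ _] ->]]] := Hs3 i k Hi Hk'.
  rewrite cardsU.
  have -> : Iseq i k :&: Jh = finset.set0.
    apply/setP => j; rewrite !inE; apply/negbTE/negP => /andP[jI jJ].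
    by move/fintype.subsetP: sub => /(_ j jJ); rewrite inE jI.
  rewrite cards0 subn0 cJ.
  have := IH (fun k' lt => Hk k' (ltnW lt)); lia.
have [m [mn mlt mJ]] : exists m, [/\ (m <= n)%N,
    (forall k, (k < m)%N -> J k != finset.set0) & J m = finset.set0].
  case: (boolP [exists k : 'I_n.+1, J k == finset.set0]).
    move=> /existsP [k0 /eqP Hk0].
    have ex : exists k, (fun k => J k == finset.set0) k by exists k0; apply/eqP.
    case: (ex_minnP ex) => m /eqP Jm minm.
    exists m; split => //.
      by apply: leq_trans (minm k0 (introT eqP Hk0)) _; rewrite -ltnS.
    by move=> k km; apply/negP => /minm; rewrite leqNgt km.
  rewrite negb_exists => /forallP Hall.
  have H1 := Hcard n.+1 (fun k' lt => Hall (Ordinal lt)).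
  have H2 : (#|Iseq i n.+1| <= n)%N.
    by rewrite -[X in (_ <= X)%N]card_ord max_card.
  lia.
exists m; split => //.
set I := Iseq i m; set t := T i m.
have [e0 [[E1 E2 E3 E4 [E5 E6]] [K1 K2 K3 K4 [K5 K6]]]] := Hs1 i m Hi mlt.
have negv : forall j, j \notin I -> vext X y I t j < 0.
  move=> j jI; have : j \notin J m by rewrite mJ inE.
  by rewrite inE jI /= -ltNge.
have lamE : forall j, lamext X y I (C i) t j = if j \in I then tlam t j else 0.
  move=> j; rewrite /lamext; case: ifP => // _.
  have -> : Jset X y I t = finset.set0 by exact: mJ.
  by rewrite inE.

exists (mkTuple (tW e0) (tb e0) (fun j => if j \in I then tv e0 j else 0)
   (tU e0) (fun j => if j \in I then tlam e0 j else 0) (tLam e0)).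
split.
  by split => //=; rewrite vnorm_ext.
split => /=.
- rewrite K1 /AstarI; congr (_ + _ + _).
  rewrite [LHS]big_mkcond [RHS]big_mkcond /=; apply: eq_bigr => j _.
  by rewrite finset.in_setT lamE; case: ifP => // _; rewrite mul0r scale0r.
- rewrite K2 [LHS]big_mkcond [RHS]big_mkcond /=; apply: eq_bigr => j _.
  by rewrite finset.in_setT lamE; case: ifP => // _; rewrite mulr0.
- move=> z; have := K3 z.
  rewrite (@suppI_ext R n I (C i) (tv t) (vext X y I t)); last first.
    by move=> j jI; rewrite /vext jI.
  move=> H; apply: le_trans (supp_mono _ _ I _ z CiP); apply: le_trans H.
  apply: lerD; first exact: (supp_neg _ _ I _ _ CiP negv).
  rewrite le_eqVlt; apply/orP; left; apply/eqP.
  rewrite /dotI [LHS]big_mkcond [RHS]big_mkcond /=; apply: eq_bigr => j _.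
  rewrite finset.in_setT lamE /vext; case: ifP => // _; by rewrite subrr mul0r.
- exact: K4.
- split => // j _; rewrite /= /vext; case: ifP => jI; first exact: K5.
  rewrite /Aop minnerZ (minnerC _ _ _ (X j)); ring.
Qed.
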